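(* Let $d=1$, $I=[-\tfrac12,\tfrac12]$, $f=g=1_I$, $\overline h=2\cdot1_{I^2}$ and $c(x,y)=\tfrac12|x-y|^2$. Then $h:=2\cdot 1_{[-\frac12,0]^2\cup[0,\frac12]^2}$ belongs to $\Gamma(f,g)^{\overline h}$ and minimizes $I_c$ over $\Gamma(f,g)^{\overline h}$. Moreover, with $u(x)=-\tfrac12x^2$, $v(y)=-\tfrac12y^2$, $S=\{(x,y):xy\ge0\}$ and $w=(c+u+v)1_S$ (so $w(x,y)=-xy\,1_{\{xy\ge0\}}$), the triple $(u,v,w)$ satisfies $c+u+v-w\ge0$, $w\le0$, and $\int c\,h=-\int uf-\int vg+\int w\,\overline h$.
   Context: $\Gamma(f,g)^{\overline h}$: nonnegative compactly supported integrable densities $h$ on $\mathbb{R}^2$ with marginals $\int h(x,y)dy=f(x)$, $\int h(x,y)dx=g(y)$ a.e. and $h\le\overline h$ a.e.; $I_c(h):=\int c\,h$. *)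

(* Defs.v *)
From HB Require Import structures.
From mathcomp Require Import all_boot all_order all_algebra.
From mathcomp Require Import all_classical all_reals all_analysis.
Set Implicit Arguments. Unset Strict Implicit. Unset Printing Implicit Defensive.
Import Order.TTheory GRing.Theory Num.Theory.
Import numFieldNormedType.Exports.
Local Open Scope classical_set_scope.
Local Open Scope ring_scope.

Section Defs.
Variable R : realType.

Definition leb := (@lebesgue_measure R).
Definition leb2 := (leb \x leb)%E.

Definition Gamma (f g : R -> R) (hbar : R * R -> R) (h : R * R -> R) : Prop :=
  [/\ (forall z, 0 <= h z),
      (exists K : set (R * R), compact K /\ forall z, ~ K z -> h z = 0),
      leb2.-integrable setT (EFin \o h),
      ({ae leb, forall x, (\int[leb]_y (h (x, y))%:E = (f x)%:E)%E}) &
      ({ae leb, forall y, (\int[leb]_x (h (x, y))%:E = (g y)%:E)%E}) /\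
      ({ae leb2, forall z, h z <= hbar z})].

Definition Ic (c : R * R -> R) (h : R * R -> R) : \bar R :=
  (\int[leb2]_z (c z * h z)%:E)%E.

Definition I : set R := [set x | -(1/2) <= x <= 1/2].
Definition f0 : R -> R := \1_I.
Definition g0 : R -> R := \1_I.
Definition hbar0 : R * R -> R := fun z => 2 * \1_(I `*` I) z.
Definition cost (z : R * R) : R := 1/2 * (z.1 - z.2) ^+ 2.
Definition h0 : R * R -> R := fun z =>
  2 * \1_(([set x : R | -(1/2) <= x <= 0] `*` [set x : R | -(1/2) <= x <= 0])
          `|` ([set x : R | 0 <= x <= 1/2] `*` [set x : R | 0 <= x <= 1/2])) z.
Definition u0 (x : R) : R := - (1/2) * x ^+ 2.
Definition v0 (y : R) : R := - (1/2) * y ^+ 2.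
Definition S0 : set (R * R) := [set z | 0 <= z.1 * z.2].
Definition w0 (z : R * R) : R := (cost z + u0 z.1 + v0 z.2) * \1_S0 z.

End Defs.

(* Main.v *)
Require Import Defs.
From HB Require Import structures.
From mathcomp Require Import all_boot all_order all_algebra.
From mathcomp Require Import all_classical all_reals all_analysis.
From mathcomp Require Import measurable_realfun.
From mathcomp Require Import ring lra.
Import Order.TTheory GRing.Theory Num.Theory.
Local Open Scope classical_set_scope.
Local Open Scope ring_scope.

Definition A1 (R : realType) : set R := [set x : R | -(1/2) <= x <= 0].
Definition A2 (R : realType) : set R := [set x : R | 0 <= x <= 1/2].
Definition D0 (R : realType) : set (R * R) := (A1 R `*` A1 R) `|` (A2 R `*` A2 R).

Lemma h0E (R : realType) z : h0 z = 2 * \1_(D0 R) z.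
Proof. by []. Qed.

Lemma A1E (R : realType) : A1 R = `[-(1/2), 0]%classic.
Proof. by rewrite /A1; apply/seteqP; split => x /=; rewrite in_itv. Qed.
Lemma A2E (R : realType) : A2 R = `[0, 1/2]%classic.
Proof. by rewrite /A2; apply/seteqP; split => x /=; rewrite in_itv. Qed.
Lemma IE (R : realType) : @I R = `[-(1/2), 1/2]%classic.
Proof. by rewrite /I; apply/seteqP; split => x /=; rewrite in_itv. Qed.

Lemma mA1 (R : realType) : measurable (A1 R).
Proof. by rewrite A1E; exact: measurable_itv. Qed.
Lemma mA2 (R : realType) : measurable (A2 R).
Proof. by rewrite A2E; exact: measurable_itv. Qed.
Lemma mI (R : realType) : measurable (@I R).
Proof. by rewrite IE; exact: measurable_itv. Qed.
Lemma mD0 (R : realType) : measurable (D0 R).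
Proof. apply: measurableU; apply: measurableX; (exact: mA1 || exact: mA2). Qed.

Lemma lebA1 (R : realType) : leb (A1 R) = (1/2)%:E.
Proof. rewrite /leb A1E lebesgue_measure_itv /= lte_fin. 
case: ifPn => h; first by congr EFin; lra.
exfalso; move/negP: h; apply; lra. Qed.
Lemma lebA2 (R : realType) : leb (A2 R) = (1/2)%:E.
Proof. rewrite /leb A2E lebesgue_measure_itv /= lte_fin. 
case: ifPn => h; first by congr EFin; lra.
exfalso; move/negP: h; apply; lra. Qed.
Lemma lebI (R : realType) : leb (@I R) = 1%:E.
Proof. rewrite /leb IE lebesgue_measure_itv /= lte_fin. 
case: ifPn => h; first by congr EFin; lra.
exfalso; move/negP: h; apply; lra. Qed.

Lemma indic1 (T : Type) (R : realType) (A : set T) z : A z -> \1_A z = 1 :> R.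
Proof. by move=> h; rewrite indicE mem_set. Qed.
Lemma indic0 (T : Type) (R : realType) (A : set T) z : ~ A z -> \1_A z = 0 :> R.
Proof. by move=> h; rewrite indicE memNset. Qed.
Arguments indic0 {T R A z}.
Arguments indic1 {T R A z}.

Lemma cuvE (R : realType) (z : R * R) : cost z + u0 z.1 + v0 z.2 = - (z.1 * z.2).
Proof. by rewrite /cost /u0 /v0; field. Qed.

Lemma w0_le0 (R : realType) (z : R * R) : w0 z <= 0.
Proof.
rewrite /w0 cuvE; have [h|h] := pselect (S0 z).
  rewrite indic1 // mulr1 oppr_le0; exact: h.
by rewrite indic0 // mulr0.
Qed.

Definition Aa (R : realType) (z : R * R) := cost z + u0 z.1 + v0 z.2 - w0 z.
Arguments Aa {R}.

Lemma Aa_ge0 (R : realType) (z : R * R) : 0 <= Aa z.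
Proof.
rewrite /Aa /w0 cuvE; have [h|h] := pselect (S0 z).
  by rewrite indic1 // mulr1 subrr.
rewrite indic0 // mulr0 subr0 oppr_ge0; rewrite /S0 /= in h.
by apply/ltW; rewrite ltNge; apply/negP.
Qed.

Lemma D0_II (R : realType) (z : R * R) : D0 R z -> (@I R `*` @I R) z.
Proof.
rewrite /D0 /A1 /A2 /I /=; case: z => x y /=.
by case=> -[/andP[? ?] /andP[? ?]]; split; apply/andP; split; lra.
Qed.

Lemma D0_S0 (R : realType) (z : R * R) : D0 R z -> S0 z.
Proof.
rewrite /D0 /A1 /A2 /S0 /=; case: z => x y /=.
case=> -[/andP[? ?] /andP[? ?]]; nra.
Qed.

Lemma Aa_h0 (R : realType) (z : R * R) : Aa z * h0 z = 0.
Proof.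
rewrite h0E; have [h|h] := pselect (D0 R z); last by rewrite indic0 // !mulr0.
by rewrite /Aa /w0 cuvE indic1 ?mulr1 ?subrr ?mul0r //; exact: D0_S0.
Qed.

Lemma w0_h0 (R : realType) (z : R * R) : w0 z * h0 z = w0 z * hbar0 z.
Proof.
rewrite h0E /hbar0; have [h|h] := pselect (D0 R z).
  by rewrite !indic1 //; exact: D0_II.
rewrite (indic0 h) mulr0 mulr0.
have [hI|hI] := pselect ((@I R `*` @I R) z); last by rewrite indic0 // !mulr0.
have [hS|hS] := pselect (S0 z); last by rewrite /w0 (indic0 hS) !mulr0 mul0r.
exfalso; apply: h; move: hI hS; rewrite /D0 /A1 /A2 /I /S0 /=; case: z => x y /=.
case=> /andP[? ?] /andP[? ?] hxy.
have [x0|x0] := leP 0 x; have [y0|y0] := leP 0 y.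
- by right; split; apply/andP; split.
- have : x = 0 by nra.
  by move=> -> ; left; split; apply/andP; split => //; lra.
- have : y = 0 by nra.
  by move=> -> ; left; split; apply/andP; split => //; lra.
- by left; split; apply/andP; split => //; lra.
Qed.

Lemma h0_le_hbar0 (R : realType) (z : R * R) : h0 z <= hbar0 z.
Proof.
rewrite h0E /hbar0; have [h|h] := pselect (D0 R z).
  by rewrite !indic1 //; exact: D0_II.
rewrite (indic0 h) mulr0 mulr_ge0 //; exact: indic_ge0.
Qed.

Lemma h0_ge0 (R : realType) (z : R * R) : 0 <= h0 z.
Proof. rewrite h0E mulr_ge0 //; exact: indic_ge0. Qed.
Lemma hbar0_ge0 (R : realType) (z : R * R) : 0 <= hbar0 z.
Proof. rewrite /hbar0 mulr_ge0 //; exact: indic_ge0. Qed.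

Lemma negw_hbar_le (R : realType) (z : R * R) : - w0 z * hbar0 z <= 1/4 * hbar0 z.
Proof.
rewrite /hbar0; have [hI|hI] := pselect ((@I R `*` @I R) z); last by rewrite indic0 // !mulr0.
rewrite indic1 // mulr1; apply: ler_wpM2r => //.
rewrite /w0 cuvE; have [hS|hS] := pselect (S0 z); last by rewrite indic0 // mulr0 oppr0.
rewrite indic1 // mulr1 opprK; move: hI; rewrite /I /=; case: z {hS} => x y /=.
case=> /andP[? ?] /andP[? ?]; nra.
Qed.

Lemma m_fst (R : realType) : measurable_fun setT (fun z : R * R => z.1).
Proof. exact: measurable_fst. Qed.
Lemma m_snd (R : realType) : measurable_fun setT (fun z : R * R => z.2).
Proof. exact: measurable_snd. Qed.

Lemma m_u0 (R : realType) : measurable_fun setT (@u0 R).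
Proof.
rewrite /u0; apply: measurable_realfun.measurable_funM => //; exact: measurable_realfun.measurable_funX.
Qed.
Lemma m_v0 (R : realType) : measurable_fun setT (@v0 R).
Proof. exact: m_u0. Qed.

Lemma m_cost (R : realType) : measurable_fun setT (@cost R).
Proof.
rewrite /cost; apply: measurable_realfun.measurable_funM => //; apply: measurable_realfun.measurable_funX.
apply: measurable_realfun.measurable_funB; [exact: m_fst|exact: m_snd].
Qed.

Lemma m_S0 (R : realType) : measurable (@S0 R).
Proof.
have mp : measurable_fun setT (fun z : R * R => z.1 * z.2).
  by apply: measurable_realfun.measurable_funM; [exact: m_fst|exact: m_snd].
have := mp measurableT _ (measurable_itv `[0, +oo[).
rewrite setTI; congr measurable; apply/seteqP; split => z /=; rewrite in_itv /= andbT //.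
Qed.

Lemma m_w0 (R : realType) : measurable_fun setT (@w0 R).
Proof.
rewrite /w0; apply: measurable_realfun.measurable_funM; last exact: measurable_realfun.measurable_indic (m_S0 R).
apply: measurable_realfun.measurable_funD; first apply: measurable_realfun.measurable_funD.
- exact: m_cost.
- exact: measurableT_comp (m_u0 R) (m_fst R).
- exact: measurableT_comp (m_v0 R) (m_snd R).
Qed.

Lemma m_h0 (R : realType) : measurable_fun setT (@h0 R).
Proof. apply: measurable_realfun.measurable_funM => //; exact: measurable_realfun.measurable_indic (mD0 R). Qed.

Lemma mII (R : realType) : measurable (@I R `*` @I R).
Proof. apply: measurableX; exact: mI. Qed.

Lemma m_hbar0 (R : realType) : measurable_fun setT (@hbar0 R).
Proof. apply: measurable_realfun.measurable_funM => //; exact: measurable_realfun.measurable_indic (mII R). Qed.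

Lemma m_Aa (R : realType) : measurable_fun setT (@Aa R).
Proof.
apply: measurable_realfun.measurable_funB; last exact: m_w0.
apply: measurable_realfun.measurable_funD; first apply: measurable_realfun.measurable_funD.
- exact: m_cost.
- exact: measurableT_comp (m_u0 R) (m_fst R).
- exact: measurableT_comp (m_v0 R) (m_snd R).
Qed.

Notation LR R := (measurableTypeR R).

Lemma ae_mono d (T : measurableType d) (R : realType) (mu : {measure set T -> \bar R})
  (P Q : T -> Prop) : (forall x, P x -> Q x) -> {ae mu, forall x, P x} -> {ae mu, forall x, Q x}.
Proof.
move=> PQ [N [mN N0 sN]]; exists N; split => // x /= nQ; apply: sN => /= hx.
exact: nQ (PQ _ hx).
Qed.

Lemma nu0_ge0 (R : realType) (x : R) : 0 <= - u0 x.
Proof. by rewrite /u0 mulNr opprK mulr_ge0 // sqr_ge0. Qed.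

Lemma cost_ge0 (R : realType) (z : R * R) : 0 <= cost z.
Proof. by rewrite /cost mulr_ge0 // sqr_ge0. Qed.

Lemma marg1 (R : realType) (h : R * R -> R) :
  (forall z, 0 <= h z) -> measurable_fun (setT : set (LR R * LR R)) h ->
  {ae @leb R, forall x, (\int[@leb R]_y (h (x, y))%:E = (f0 x)%:E)%E} ->
  (\int[@leb2 R]_z ((- u0 z.1) * h z)%:E = \int[@leb R]_x ((- u0 x) * f0 x)%:E)%E.
Proof.
move=> hge0 mh hm.
have mF : measurable_fun (setT : set (LR R * LR R)) (fun z : R * R => ((- u0 z.1) * h z)%:E).
  apply/measurable_EFinP; apply: measurable_funM => //.
  apply: measurable_funN.
  exact: measurableT_comp (m_u0 R) (m_fst R).
have F0 : forall z : R * R, (0 <= ((- u0 z.1) * h z)%:E)%E.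
  by move=> z; rewrite lee_fin mulr_ge0 // nu0_ge0.
rewrite /leb2 (fubini_tonelli1 _ mF F0).
apply: ae_eq_integral => //.
- exact: measurable_fun_fubini_tonelli_F.
- apply/measurable_EFinP; apply: measurable_funM => //.
    apply: measurable_funN; exact: m_u0.
  rewrite /f0; exact: measurable_indic (mI R).
- case: hm => N [mN N0 sN]; exists N; split => //.
  move=> x /= nQ; apply: sN => /= hx; apply: nQ => _; rewrite /fubini_F /=.
  under eq_integral do rewrite EFinM.
  rewrite ge0_integralZl_EFin //.
  + by rewrite hx EFinM.
  + by move=> y _; rewrite lee_fin.
  + apply/measurable_EFinP; exact: measurableT_comp mh (pair1_measurable x).
  + exact: nu0_ge0.
Qed.

Lemma marg2 (R : realType) (h : R * R -> R) :
  (forall z, 0 <= h z) -> measurable_fun (setT : set (LR R * LR R)) h ->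
  {ae @leb R, forall y, (\int[@leb R]_x (h (x, y))%:E = (g0 y)%:E)%E} ->
  (\int[@leb2 R]_z ((- v0 z.2) * h z)%:E = \int[@leb R]_y ((- v0 y) * g0 y)%:E)%E.
Proof.
move=> hge0 mh hm.
have mF : measurable_fun (setT : set (LR R * LR R)) (fun z : R * R => ((- v0 z.2) * h z)%:E).
  apply/measurable_EFinP; apply: measurable_funM => //.
  apply: measurable_funN.
  exact: measurableT_comp (m_v0 R) (m_snd R).
have F0 : forall z : R * R, (0 <= ((- v0 z.2) * h z)%:E)%E.
  by move=> z; rewrite lee_fin mulr_ge0 // nu0_ge0.
rewrite /leb2 (fubini_tonelli2 _ mF F0).
apply: ae_eq_integral => //.
- exact: measurable_fun_fubini_tonelli_G.
- apply/measurable_EFinP; apply: measurable_funM => //.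
    apply: measurable_funN; exact: m_v0.
  rewrite /g0; exact: measurable_indic (mI R).
- case: hm => N [mN N0 sN]; exists N; split => //.
  move=> y /= nQ; apply: sN => /= hy; apply: nQ => _; rewrite /fubini_G /=.
  under eq_integral do rewrite EFinM.
  rewrite ge0_integralZl_EFin //.
  + by rewrite hy EFinM.
  + by move=> x _; rewrite lee_fin.
  + apply/measurable_EFinP; exact: measurableT_comp mh (pair2_measurable y).
  + exact: nu0_ge0.
Qed.

Lemma mEh (R : realType) (g h : R * R -> R) :
  measurable_fun (setT : set (LR R * LR R)) g ->
  measurable_fun (setT : set (LR R * LR R)) h ->
  measurable_fun (setT : set (LR R * LR R)) (fun z => (g z * h z)%:E).
Proof. by move=> mg mh; apply/measurable_EFinP; exact: measurable_funM. Qed.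
Arguments mEh {R g h}.
Arguments marg1 {R h}.
Arguments marg2 {R h}.

Lemma pEh (R : realType) (g h : R * R -> R) :
  (forall z, 0 <= g z) -> (forall z, 0 <= h z) ->
  forall z, setT z -> (0 <= (g z * h z)%:E)%E.
Proof. by move=> g0 h0 z _; rewrite lee_fin mulr_ge0. Qed.
Arguments pEh {R g h}.

Lemma negw_ge0 (R : realType) (z : R * R) : 0 <= - w0 z.
Proof. by rewrite oppr_ge0 w0_le0. Qed.
Lemma nu0z_ge0 (R : realType) (z : R * R) : 0 <= - u0 z.1.
Proof. exact: nu0_ge0. Qed.
Lemma nv0z_ge0 (R : realType) (z : R * R) : 0 <= - v0 z.2.
Proof. exact: nu0_ge0. Qed.

Lemma m_negw (R : realType) : measurable_fun (setT : set (LR R * LR R)) (fun z => - @w0 R z).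
Proof. apply: measurable_funN; exact: m_w0. Qed.
Lemma m_nu0z (R : realType) : measurable_fun (setT : set (LR R * LR R)) (fun z => - @u0 R z.1).
Proof. apply: measurable_funN; exact: measurableT_comp (m_u0 R) (m_fst R). Qed.
Lemma m_nv0z (R : realType) : measurable_fun (setT : set (LR R * LR R)) (fun z => - @v0 R z.2).
Proof. apply: measurable_funN; exact: measurableT_comp (m_v0 R) (m_snd R). Qed.

Lemma decomp (R : realType) (h : R * R -> R) :
  (forall z, 0 <= h z) -> measurable_fun (setT : set (LR R * LR R)) h ->
  {ae @leb R, forall x, (\int[@leb R]_y (h (x, y))%:E = (f0 x)%:E)%E} ->
  {ae @leb R, forall y, (\int[@leb R]_x (h (x, y))%:E = (g0 y)%:E)%E} ->
  (Ic (@cost R) h + \int[@leb2 R]_z ((- w0 z) * h z)%:E =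
   \int[@leb2 R]_z (Aa z * h z)%:E +
   (\int[@leb R]_x ((- u0 x) * f0 x)%:E + \int[@leb R]_y ((- v0 y) * g0 y)%:E))%E.
Proof.
move=> hge0 mh hm1 hm2.
rewrite -[X in (_ + (_ + X))%E](marg2 hge0 mh hm2) -[X in (_ + (X + _))%E](marg1 hge0 mh hm1) /Ic.
rewrite -(ge0_integralD (@leb2 R) measurableT (pEh (@cost_ge0 R) hge0)
   (mEh (m_cost R) mh) (pEh (@negw_ge0 R) hge0) (mEh (m_negw R) mh)).
rewrite -(ge0_integralD (@leb2 R) measurableT (pEh (@nu0z_ge0 R) hge0)
   (mEh (m_nu0z R) mh) (pEh (@nv0z_ge0 R) hge0) (mEh (m_nv0z R) mh)).
have mS : measurable_fun (setT : set (LR R * LR R))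
   (fun z => (- u0 z.1 * h z)%:E + (- v0 z.2 * h z)%:E)%E.
  apply: emeasurable_funD; [exact: mEh (m_nu0z R) mh | exact: mEh (m_nv0z R) mh].
have pS : forall z, setT z -> (0 <= (- u0 z.1 * h z)%:E + (- v0 z.2 * h z)%:E)%E.
  move=> z _; apply: adde_ge0; [exact: pEh (@nu0z_ge0 R) hge0 z Logic.I|exact: pEh (@nv0z_ge0 R) hge0 z Logic.I].
rewrite -(ge0_integralD (@leb2 R) measurableT (pEh (@Aa_ge0 R) hge0)
   (mEh (m_Aa R) mh) pS mS).
apply: eq_integral => z _; rewrite -!EFinD; congr EFin; rewrite /Aa; ring.
Qed.

Lemma int_hbar0 (R : realType) : (\int[@leb2 R]_z (hbar0 z)%:E = 2%:E)%E.
Proof.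
under eq_integral do rewrite /hbar0 EFinM.
rewrite ge0_integralZl_EFin //.
- rewrite integral_indic //; last exact: mII.
  have P : (@leb2 R (@I R `*` @I R) = 1%E).
    apply: eq_trans; first exact: (product_measure1E (@leb R) (@leb R) (mI R) (mI R)).
    transitivity ((1:R)%:E * (1:R)%:E)%E; last by rewrite mule1.
    by congr (_ * _)%E; exact: lebI.
  rewrite setIT; transitivity (2%:E * (1:R)%:E)%E; last by rewrite mule1.
  by congr (_ * _)%E; exact: P.
apply/measurable_EFinP; exact: measurable_indic (mII R).
Qed.

Lemma W_fin (R : realType) :
  (\int[@leb2 R]_z ((- w0 z) * hbar0 z)%:E)%E \is a fin_num.
Proof.
rewrite ge0_fin_numE; last by apply: integral_ge0 => z _; rewrite lee_fin mulr_ge0 // ?negw_ge0 ?hbar0_ge0.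
apply: (le_lt_trans (ge0_le_integral (@leb2 R) measurableT
  (f2 := fun z => ((1/4) * hbar0 z)%:E)
  (pEh (@negw_ge0 R) (@hbar0_ge0 R)) (mEh (m_negw R) (m_hbar0 R)) _ _)).
- apply/measurable_EFinP; apply: measurable_funM => //; exact: m_hbar0.
- by move=> z _; rewrite lee_fin negw_hbar_le.
under eq_integral do rewrite EFinM.
rewrite ge0_integralZl_EFin //.
- by rewrite int_hbar0 -EFinM ltry.
- by move=> z _; rewrite lee_fin hbar0_ge0.
- apply/measurable_EFinP; exact: m_hbar0.
Qed.

Lemma int2ind (R : realType) (A : set R) : measurable A ->
  (\int[@leb R]_y (2 * \1_A y)%:E = 2%:E * @leb R A)%E.
Proof.
move=> mA; under eq_integral do rewrite EFinM.
rewrite ge0_integralZl_EFin //.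
- by rewrite integral_indic // setIT.
- apply/measurable_EFinP; exact: measurable_indic.
Qed.

Lemma h0_left (R : realType) (x y : R) : -(1/2) <= x -> x < 0 ->
  h0 (x, y) = 2 * \1_(A1 R) y.
Proof.
move=> h1 h2; rewrite h0E; congr (_ * _).
have [hy|hy] := pselect (A1 R y).
  by rewrite !indic1 //; left; split => //=; rewrite /A1 /=; apply/andP; split; lra.
rewrite !indic0 // => -[[_ /= //]|[/= /andP[? ?] _]]; lra.
Qed.

Lemma h0_right (R : realType) (x y : R) : 0 < x -> x <= 1/2 ->
  h0 (x, y) = 2 * \1_(A2 R) y.
Proof.
move=> h1 h2; rewrite h0E; congr (_ * _).
have [hy|hy] := pselect (A2 R y).
  by rewrite !indic1 //; right; split => //=; rewrite /A2 /=; apply/andP; split; lra.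
rewrite !indic0 // => -[[/= /andP[? ?] _]|[_ /= //]]; lra.
Qed.

Lemma h0_out (R : realType) (x y : R) : ~ @I R x -> h0 (x, y) = 0.
Proof.
move=> hx; rewrite h0E indic0 ?mulr0 // => /D0_II [] //.
Qed.

Lemma marg_h0 (R : realType) (x : R) : x != 0 ->
  (\int[@leb R]_y (h0 (x, y))%:E = (f0 x)%:E)%E.
Proof.
move=> x0; rewrite /f0.
have [hx|hx] := pselect (@I R x); last first.
  rewrite indic0 //; under eq_integral do rewrite h0_out //.
  by rewrite integral0.
rewrite indic1 //; move: hx; rewrite /I /= => /andP[h1 h2].
have [xn|xp] := ltP x 0.
  under eq_integral do rewrite h0_left //.
  rewrite int2ind; last exact: mA1.
  transitivity (2%:E * (1/2 : R)%:E)%E; first by congr (_ * _)%E; exact: lebA1.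
  by rewrite -EFinM; congr EFin; field.
have xp' : 0 < x by rewrite lt_neqAle eq_sym x0.
under eq_integral do rewrite h0_right //.
rewrite int2ind; last exact: mA2.
transitivity (2%:E * (1/2 : R)%:E)%E; first by congr (_ * _)%E; exact: lebA2.
by rewrite -EFinM; congr EFin; field.
Qed.

Lemma h0_sym (R : realType) (x y : R) : h0 (x, y) = h0 (y, x).
Proof.
rewrite !h0E; congr (_ * _).
have [h|h] := pselect (D0 R (x, y)).
  rewrite !indic1 //; case: h => -[/= ? ?]; [left|right]; split => //.
rewrite !indic0 // => -[[/= ? ?]|[/= ? ?]]; apply: h; [left|right]; split => //.
Qed.

Lemma ae_ne0 (R : realType) (P : R -> Prop) :
  (forall x, x != 0 -> P x) -> {ae @leb R, forall x, P x}.
Proof.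
move=> HP; exists [set 0]; split.
- exact: measurable_set1.
- exact: lebesgue_measure_set1.
- move=> x /= nP; have [//|x0] := eqVneq x 0.
  by exfalso; apply: nP; exact: HP.
Qed.

Lemma Gamma_h0 (R : realType) : Gamma (@f0 R) (@g0 R) (@hbar0 R) (@h0 R).
Proof.
split.
- exact: h0_ge0.
- exists (@I R `*` @I R); split.
    by rewrite IE; exact: compact_setX (@segment_compact R _ _) (@segment_compact R _ _).
  move=> z nz; rewrite h0E indic0 ?mulr0 //; move=> /D0_II; exact: nz.
- apply/integrableP; split; first by apply/measurable_EFinP; exact: m_h0.
  under eq_integral => z _.
    rewrite (_ : `|(EFin \o @h0 R) z|%E = (h0 z)%:E); last first.
      apply: eq_trans; first exact: abse_EFin.
      by rewrite ger0_norm // h0_ge0.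
    over.
  apply: (le_lt_trans (ge0_le_integral (@leb2 R) measurableT
    (f2 := fun z => (hbar0 z)%:E) _ _ _ _)).
  + by move=> z _; rewrite lee_fin h0_ge0.
  + apply/measurable_EFinP; exact: m_h0.
  + apply/measurable_EFinP; exact: m_hbar0.
  + by move=> z _; rewrite lee_fin h0_le_hbar0.
  by rewrite int_hbar0 ltry.
- apply: ae_ne0 => x x0; exact: marg_h0.
- split.
    apply: ae_ne0 => y y0.
    under eq_integral do rewrite h0_sym.
    by rewrite marg_h0.
  apply: aeW => z; exact: h0_le_hbar0.
Qed.

Arguments decomp {R h}.

Lemma marg_h0_x (R : realType) :
  {ae @leb R, forall x, (\int[@leb R]_y (h0 (x, y))%:E = (f0 x)%:E)%E}.
Proof. by apply: ae_ne0 => x x0; exact: marg_h0. Qed.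
Lemma marg_h0_y (R : realType) :
  {ae @leb R, forall y, (\int[@leb R]_x (h0 (x, y))%:E = (g0 y)%:E)%E}.
Proof.
apply: ae_ne0 => y y0; under eq_integral do rewrite h0_sym.
by rewrite marg_h0.
Qed.

Lemma key_h0 (R : realType) :
  (Ic (@cost R) (@h0 R) + \int[@leb2 R]_z ((- w0 z) * hbar0 z)%:E =
   \int[@leb R]_x ((- u0 x) * f0 x)%:E + \int[@leb R]_y ((- v0 y) * g0 y)%:E)%E.
Proof.
have := decomp (@h0_ge0 R) (m_h0 R) (marg_h0_x R) (marg_h0_y R).
have -> : (\int[@leb2 R]_z (- w0 z * h0 z)%:E = \int[@leb2 R]_z (- w0 z * hbar0 z)%:E)%E.
  by apply: eq_integral => z _; rewrite !mulNr w0_h0.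
have -> : (\int[@leb2 R]_z (Aa z * h0 z)%:E = 0)%E.
  by under eq_integral do rewrite Aa_h0; rewrite integral0.
by rewrite add0e.
Qed.

Theorem mainTheorem13 (R : realType) :
  [/\ Gamma (@f0 R) (@g0 R) (@hbar0 R) (@h0 R),
      (forall h, Gamma (@f0 R) (@g0 R) (@hbar0 R) h ->
         (Ic (@cost R) (@h0 R) <= Ic (@cost R) h)%E),
      (forall z : R * R, 0 <= cost z + u0 z.1 + v0 z.2 - w0 z),
      (forall z : R * R, w0 z <= 0) &
      Ic (@cost R) (@h0 R) =
        (- (\int[@leb R]_x (u0 x * f0 x)%:E)
         - (\int[@leb R]_y (v0 y * g0 y)%:E)
         + (\int[@leb2 R]_z (w0 z * hbar0 z)%:E))%E].
Proof.
split.
- exact: Gamma_h0.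
- move=> h [hge0 _ hint hm1 [hm2 hle]].
  move/integrableP: hint => [/measurable_EFinP mh _].
  have key := decomp hge0 mh hm1 hm2.
  rewrite -(leeD2rE _ _ (W_fin R)) key_h0.
  apply: (le_trans _ (_ : Ic (@cost R) h + \int[@leb2 R]_z (- w0 z * h z)%:E
     <= Ic (@cost R) h + \int[@leb2 R]_z (- w0 z * hbar0 z)%:E)%E).
    rewrite key; apply: leeDr.
    by apply: integral_ge0 => z _; rewrite lee_fin mulr_ge0 // Aa_ge0.
  apply: leeD2l.
  apply: ae_ge0_le_integral => //.
  + by move=> z _; rewrite lee_fin mulr_ge0 // negw_ge0.
  + exact: mEh (m_negw R) mh.
  + by move=> z _; rewrite lee_fin mulr_ge0 // ?negw_ge0 ?hbar0_ge0.
  + exact: mEh (m_negw R) (m_hbar0 R).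
  + case: hle => N [mN N0 sN]; exists N; split => // z /= nQ; apply: sN => /= hz.
    apply: nQ => _; rewrite lee_fin; apply: ler_wpM2l => //; exact: negw_ge0.
- exact: Aa_ge0.
- exact: w0_le0.
- have eU : (\int[@leb R]_x (u0 x * f0 x)%:E = - \int[@leb R]_x ((- u0 x) * f0 x)%:E)%E.
    rewrite -integral_ge0N; last by move=> x _; rewrite lee_fin mulr_ge0 // nu0_ge0.
    by apply: eq_integral => x _; rewrite -EFinN mulNr opprK.
  have eV : (\int[@leb R]_y (v0 y * g0 y)%:E = - \int[@leb R]_y ((- v0 y) * g0 y)%:E)%E.
    rewrite -integral_ge0N; last by move=> x _; rewrite lee_fin mulr_ge0 // nu0_ge0.
    by apply: eq_integral => x _; rewrite -EFinN mulNr opprK.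
  have eW : (\int[@leb2 R]_z (w0 z * hbar0 z)%:E = - \int[@leb2 R]_z ((- w0 z) * hbar0 z)%:E)%E.
    rewrite -integral_ge0N; last by move=> z _; rewrite lee_fin mulr_ge0 // ?negw_ge0 ?hbar0_ge0.
    by apply: eq_integral => z _; rewrite -EFinN mulNr opprK.
  rewrite eU eW !oppeK.
  transitivity (Ic (@cost R) (@h0 R) + \int[@leb2 R]_z ((- w0 z) * hbar0 z)%:E
     - \int[@leb2 R]_z ((- w0 z) * hbar0 z)%:E)%E.
    by rewrite addeK //; exact: W_fin.
  by rewrite key_h0.
Qed.
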